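(* Let $q$ be a prime power, $n \le m$, and let $\mathcal G(n,k)$ be a Gabidulin code of length $n$ and dimension $k$ over $\mathbb F_{q^m}$ with minimum rank distance $d = n-k+1$. Let $\tau < d$. Then for every $\mathbf r \in \mathbb F_{q^m}^n$, and hence for $\ell = \max_{\mathbf r \in \mathbb F_{q^m}^n} |\mathcal B_\tau(\mathbf r) \cap \mathcal G(n,k)|$, $$\ell \le \sum_{t = \lfloor (d-1)/2\rfloor + 1}^{\tau} \frac{\left[\begin{smallmatrix} n \\ 2t+1-d\end{smallmatrix}\right]_q}{\left[\begin{smallmatrix} t \\ 2t+1-d\end{smallmatrix}\right]_q} \le 4 \sum_{t = \lfloor (d-1)/2\rfloor + 1}^{\tau} q^{(2t-d+1)(n-t)} \le 4\left(\tau - \left\lfloor \tfrac{d-1}{2}\right\rfloor\right) q^{(2\tau - d+1)(n - \lfloor (d-1)/2\rfloor - 1)}.$$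
   Context: A linearized polynomial over $\mathbb F_{q^m}$ is $f(x) = \sum_{i} f_i x^{q^i}$ with $f_i \in \mathbb F_{q^m}$; its $q$-degree is the largest $i$ with $f_i \neq 0$. The Gabidulin code $\mathcal G(n,k)$ is $\{(f(\alpha_0), \dots, f(\alpha_{n-1})) : \deg_q f < k\}$ for fixed $\alpha_0,\dots,\alpha_{n-1} \in \mathbb F_{q^m}$ linearly independent over $\mathbb F_q$. Fixing a basis of $\mathbb F_{q^m}$ over $\mathbb F_q$, each $\mathbf x \in \mathbb F_{q^m}^n$ corresponds to a matrix in $\mathbb F_q^{m\times n}$, and $\mathrm{rank}(\mathbf x)$ is its $\mathbb F_q$-rank. Its minimum rank distance is $d=n-k+1$. $\mathcal B_\tau(\mathbf r)$ is the set of $\mathbf x \in \mathbb F_{q^m}^n$ with $\mathrm{rank}(\mathbf x - \mathbf r) \le \tau$. The Gaussian binomial is $\left[\begin{smallmatrix} n \\ s\end{smallmatrix}\right]_q = \prod_{i=0}^{s-1}\frac{q^n-q^i}{q^s-q^i}$. *)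

(* Defs.v *)
From HB Require Import structures.
From mathcomp Require Import all_boot all_order all_algebra all_field.
Set Implicit Arguments. Unset Strict Implicit. Unset Printing Implicit Defensive.
Import Order.TTheory GRing.Theory Num.Theory.
Local Open Scope ring_scope.

(* F_q = K (a finite field with q elements), F_{q^m} = L, an extension of K
   of degree m = \dim {:L}. *)
Section Gabidulin.
Variables (K : finFieldType) (L : fieldExtType K).

(* Evaluation of the linearized polynomial sum_i f_i x^{q^i}, coefficient
   list f = [f_0; ...; f_{k-1}] (so q-degree < size f). *)
Definition linpoly_eval (q : nat) (f : seq L) (x : L) : L :=
  \sum_(i < size f) f`_i * x ^+ (q ^ i).

Definition gabidulin_codeword (q n k : nat) (alpha : 'I_n -> L) (c : 'rV[L]_n)
  : Prop :=
  exists f : seq L, size f = k /\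
    c = \row_(j < n) linpoly_eval q f (alpha j).

Definition rank_q (n : nat) (x : 'rV[L]_n) : nat :=
  \rank (\matrix_(i < \dim {:L}, j < n) coord (vbasis fullv) i (x 0 j)).

End Gabidulin.

Definition gauss_binom (q n s : nat) : rat :=
  \prod_(i < s) (((q ^ n)%:R - (q ^ i)%:R) / ((q ^ s)%:R - (q ^ i)%:R)).

(* Main.v *)
Require Import Defs.
From HB Require Import structures.
From mathcomp Require Import all_boot all_order all_algebra all_field all_solvable.
From mathcomp Require Import zify ring lra.
From Stdlib Require Import Lia.
Set Implicit Arguments. Unset Strict Implicit. Unset Printing Implicit Defensive.
Import Order.TTheory GRing.Theory Num.Theory.
Local Open Scope ring_scope.

Section Count.
Variable F : finFieldType.
Local Notation q := #|F|.

Lemma card_rowspace m n (V : 'M[F]_(m, n)) :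
  #|[set v : 'rV[F]_n | (v <= V)%MS]| = (q ^ \rank V)%N.
Proof.
have [B BK] := row_freeP (row_base_free V).
have ->: [set v : 'rV[F]_n | (v <= V)%MS] = [set w *m row_base V | w in 'rV[F]_(\rank V)].
  apply/setP => v; rewrite inE; apply/idP/imsetP.
    by rewrite -(eq_row_base V) => /submxP [w ->]; exists w.
  by case=> w _ ->; rewrite -(eq_row_base V) submxMl.
rewrite card_imset; first by rewrite card_mx mul1n.
by apply: (can_inj (g := mulmx^~ B)) => w; rewrite -mulmxA BK mulmx1.
Qed.

Lemma card_rowfree m n : (m <= n)%N ->
  #|[set A : 'M[F]_(m, n) | row_free A]| = (\prod_(i < m) (q ^ n - q ^ i))%N.
Proof.
set p := q.
pose fr m := [pred A : 'M[F]_(m, n) | \rank A == m].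
have ->: #|[set A : 'M[F]_(m, n) | row_free A]| = #|fr m|.
  by apply: eq_card => A; rewrite inE.
elim: m => [_ | m IHm /ltnW-le_mn].
  rewrite big_ord0 (@eq_card1 _ (0 : 'M_(0, n))) //= => A.
  by rewrite flatmx0 !inE mxrank.unlock !eqxx.
rewrite big_ord_recr /= -{}IHm //.
rewrite -sum_nat_const /= -sum1_card -add1n.
rewrite (partition_big dsubmx (fr m)) /= => [|A]; last first.
  rewrite !inE -{1}(vsubmxK A); move: {A}(_ A) (_ A) => Ad Au Afull.
  rewrite eqn_leq rank_leq_row -(leq_add2l (\rank Au)) -mxrank_sum_cap.
  rewrite {1 3}[@mxrank]lock addsmxE (eqnP Afull) -lock -addnA.
  by rewrite leq_add ?rank_leq_row ?leq_addr.
apply: eq_bigr => A rAm; rewrite (reindex (col_mx^~ A)) /=; last first.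
  exists usubmx => [v _ | vA]; first by rewrite col_mxKu.
  by case/andP=> _ /eqP <-; rewrite vsubmxK.
transitivity #|~: [set v *m A | v in 'rV_m]|; last first.
  rewrite cardsCs setCK card_imset ?card_mx ?card_ord ?mul1n //.
  have [B AB1] := row_freeP rAm; apply: can_inj (mulmx^~ B) _ => v.
  by rewrite -mulmxA AB1 mulmx1.
rewrite -sum1_card; apply: eq_bigl => v; rewrite !inE col_mxKd eqxx.
rewrite andbT eqn_leq rank_leq_row /= -(leq_add2r (\rank (v :&: A)%MS)).
rewrite -addsmxE mxrank_sum_cap (eqnP rAm) addnAC leq_add2r.
rewrite (ltn_leqif (mxrank_leqif_sup _)) ?capmxSl // sub_capmx submx_refl.
by congr (~~ _); apply/submxP/imsetP=> [] [u]; exists u.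
Qed.


Lemma card_rowfree_sub k n (U : 'M[F]_(k, n)) s :
  #|[set A : 'M[F]_(s, n) | row_free A && (A <= U)%MS]|
  = #|[set B : 'M[F]_(s, \rank U) | row_free B]|.
Proof.
have [C CK] := row_freeP (row_base_free U).
have ->: [set A : 'M[F]_(s, n) | row_free A && (A <= U)%MS]
   = [set B *m row_base U | B in [set B : 'M[F]_(s, \rank U) | row_free B]].
  apply/setP => A; rewrite inE; apply/andP/imsetP.
    case=> fA; rewrite -(eq_row_base U) => /submxP [B eB]; exists B => //.
    by rewrite inE /row_free -(mxrankMfree B (row_base_free U)) -eB.
  case=> B; rewrite inE => fB ->; split; last by rewrite -(eq_row_base U) submxMl.
  by rewrite /row_free mxrankMfree ?row_base_free.
rewrite card_imset //.
by apply: (can_inj (g := mulmx^~ C)) => w; rewrite -mulmxA CK mulmx1.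
Qed.

Lemma extend_space a n (R : 'M[F]_(a, n)) t : (\rank R <= t <= n)%N ->
  exists V : 'M[F]_n, (R <= V)%MS && (\rank V == t).
Proof.
case/andP => Rt tn.
suff H : forall j, (\rank R + j <= n)%N ->
    exists V : 'M[F]_n, (R <= V)%MS && (\rank V == \rank R + j)%N.
  by have := H (t - \rank R)%N; rewrite subnKC //; apply.
elim => [_|j IH jt].
  by exists <<R>>%MS; rewrite genmxE submx_refl mxrank_gen addn0 eqxx.
have jt' : (\rank R + j <= n)%N by apply: ltnW; rewrite -addnS.
have [V /andP [RV /eqP rV]] := IH jt'.
have rVn : (\rank V < n)%N by rewrite rV -addnS.
have : (0 < \rank V^C)%N by rewrite mxrank_compl subn_gt0.
rewrite lt0n mxrank_eq0 => /rowV0Pn [v vC nz0].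
exists (V + <<v>>)%MS; rewrite (submx_trans RV (addsmxSl _ _)) /=.
have := mxrank_sum_cap V <<v>>%MS.
have -> : \rank (V :&: <<v>>)%MS = 0%N.
  apply/eqP; rewrite mxrank_eq0 -submx0 -(capmx_compl V).
  by rewrite capmxS // genmxE.
by rewrite addn0 mxrank_gen rank_rV nz0 rV addn1 addnS => ->.
Qed.

End Count.

Section Lin.
Variables (K : finFieldType) (L : fieldExtType K).
Local Notation q := #|K|.

Lemma frobK (a : K) i : a ^+ (q ^ i) = a.
Proof.
elim: i => [|i IH]; first by rewrite expn0 expr1.
by rewrite expnS exprM expf_card IH.
Qed.

Lemma pnat_q i : [pchar L].-nat (q ^ i)%N.
Proof.
have [p pr pK] := finPcharP K.
have pq : p.-nat q.
  by have := abelem_pgroup (fin_ring_pchar_abelem pK); rewrite /pgroup cardsT.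
rewrite pnatX; apply/orP; left.
apply: sub_in_pnat pq => r _; rewrite inE => /eqP ->.
by rewrite (pchar_lalg L p).
Qed.

Lemma frob_lin (a : K) (x y : L) i :
  (a *: x + y) ^+ (q ^ i) = a *: x ^+ (q ^ i) + y ^+ (q ^ i).
Proof.
rewrite exprDn_pchar ?pnat_q //; congr (_ + _).
by rewrite exprZn frobK. Qed.

Lemma lpD (f : seq L) (x y : L) : linpoly_eval q f (x + y) = linpoly_eval q f x + linpoly_eval q f y.
Proof.
rewrite /linpoly_eval -big_split /=; apply: eq_bigr => i _.
by rewrite -mulrDr; have := frob_lin 1 x y i; rewrite !scale1r => ->.
Qed.

Lemma lpZ (f : seq L) (a : K) (x : L) : linpoly_eval q f (a *: x) = a *: linpoly_eval q f x.
Proof.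
rewrite /linpoly_eval scaler_sumr; apply: eq_bigr => i _.
have q0 : (0 < q ^ i)%N by rewrite expn_gt0 (ltnW (card_finNzRing_gt1 K)).
by rewrite -[a *: x]addr0 frob_lin expr0n eqn0Ngt q0 addr0 scalerAr.
Qed.

Lemma lp0 (f : seq L) : linpoly_eval q f 0 = 0.
Proof. by have := lpZ f 0 0; rewrite !scale0r. Qed.

Lemma lp_sum (f : seq L) n (v : 'I_n -> K) (al : 'I_n -> L) :
  linpoly_eval q f (\sum_j v j *: al j) = \sum_j v j *: linpoly_eval q f (al j).
Proof.
rewrite (big_morph _ (lpD f) (lp0 f)); apply: eq_bigr => j _; exact: lpZ.
Qed.


Definition Mq n (x : 'rV[L]_n) : 'M[K]_(\dim {:L}, n) :=
  \matrix_(i < \dim {:L}, j < n) coord (vbasis fullv) i (x 0 j).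

Lemma rank_qE n (x : 'rV[L]_n) : rank_q x = \rank (Mq x).
Proof. by []. Qed.

Lemma MqB n (x y : 'rV[L]_n) : Mq (x - y) = Mq x - Mq y.
Proof. by apply/matrixP => i j; rewrite !mxE linearB. Qed.

Lemma free_inj n (alpha : 'I_n -> L) : free [seq alpha i | i <- enum 'I_n] ->
  forall v : 'I_n -> K, \sum_j v j *: alpha j = 0 -> forall j, v j = 0.
Proof.
move=> fr v sv j.
have fr' : free (map_tuple alpha (ord_tuple n)) by [].
apply: (freeP fr' v); rewrite -[RHS]sv; apply: eq_bigr => i _.
congr (_ *: _); rewrite -tnth_nth tnth_map tnth_ord_tuple //.
Qed.


Lemma codeword_rank n (alpha : 'I_n -> L) (f : seq L) (c : 'rV[L]_n) :
  free [seq alpha i | i <- enum 'I_n] ->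
  (size f <= n)%N -> c = \row_j linpoly_eval q f (alpha j) -> c != 0 ->
  (n - size f + 1 <= \rank (Mq c))%N.
Proof.
move=> fr fn ec nz.
have q1 : (1 < q)%N := card_finNzRing_gt1 K.
pose P : {poly L} := \sum_(i < size f) f`_i *: 'X^(q ^ i).
have PE x : P.[x] = linpoly_eval q f x.
  by rewrite /P horner_sum; apply: eq_bigr => i _; rewrite hornerZ hornerXn.
have Pnz : P != 0.
  apply: contra nz => /eqP P0; apply/eqP/rowP => j.
  by rewrite ec !mxE -PE P0 horner0.
have k0 : (0 < size f)%N.
  rewrite lt0n; apply: contra Pnz => /eqP k0; apply/eqP.
  by rewrite /P (size0nil k0) big_ord0.
pose phi (v : 'rV[K]_n) := \sum_j v 0 j *: alpha j.
pose V := kermx (Mq c)^T.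
have rootV v : (v <= V)%MS -> root P (phi v).
  rewrite sub_kermx => /eqP vA; apply/eqP.
  rewrite PE /phi lp_sum.
  set y := \sum_j _.
  rewrite (coord_vbasis (memvf y)); apply: big1 => i _.
  have : (v *m (Mq c)^T) 0 i = 0 by rewrite vA mxE.
  rewrite !mxE => ci.
  suff -> : coord (vbasis fullv) i y = 0 by rewrite scale0r.
  rewrite /y linear_sum -[RHS]ci; apply: eq_bigr => j _.
  by rewrite linearZ /= !mxE ec !mxE.
have phi_inj : injective phi.
  move=> v w evw; apply/rowP => j; apply/eqP; rewrite -subr_eq0; apply/eqP.
  have H : \sum_j (v 0 j - w 0 j) *: alpha j = 0.
    transitivity (phi v - phi w); last by rewrite evw subrr.
    by rewrite /phi -sumrB; apply: eq_bigr => i _; rewrite scalerBl.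
  exact: (free_inj fr H).
have := max_poly_roots Pnz (rs := [seq phi v | v <- enum [set v : 'rV[K]_n | (v <= V)%MS]]).
rewrite map_inj_uniq // enum_uniq size_map -cardE card_rowspace.
have -> : all (root P) [seq phi v | v <- enum [set v : 'rV[K]_n | (v <= V)%MS]].
  by apply/allP => x /mapP [v]; rewrite mem_enum inE => vV ->; apply: rootV.
move=> /(_ isT isT) H.
have sP : (size P <= (q ^ (size f).-1).+1)%N.
  apply: leq_trans (size_sum _ _ _) _; apply/bigmax_leqP => i _.
  apply: leq_trans (size_scale_leq _ _) _; rewrite size_polyXn ltnS leq_pexp2l //.
  by have := ltn_ord i; lia.
  have := ltn_ord i; lia.
have := leq_trans H sP; rewrite ltnS leq_exp2l //.
rewrite mxrank_ker mxrank_tr.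
have := rank_leq_col (Mq c).
lia.
Qed.


Lemma lpE (f : seq L) x : linpoly_eval q f x = \sum_(0 <= i < size f) f`_i * x ^+ (q ^ i).
Proof. by rewrite big_mkord. Qed.

Lemma codeword_dist n (alpha : 'I_n -> L) k (c c' : 'rV[L]_n) :
  free [seq alpha i | i <- enum 'I_n] -> (k <= n)%N ->
  gabidulin_codeword q k alpha c -> gabidulin_codeword q k alpha c' -> c != c' ->
  (n - k + 1 <= \rank (Mq (c - c')))%N.
Proof.
move=> fr kn [f [sf ->]] [f' [sf' ->]] ne.
have := @codeword_rank n alpha (mkseq (fun i => f`_i - f'`_i) k) _ fr.
rewrite size_mkseq; apply => //.
- apply/rowP => j; rewrite !mxE !lpE size_mkseq sf sf' -sumrB.
  by rewrite !big_nat; apply: eq_bigr => i /andP [_ ik]; rewrite nth_mkseq // mulrBl.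
- by rewrite subr_eq0.
Qed.

End Lin.

Lemma gbE q n s : gauss_binom q n s =
  \prod_(i < s) (((q%:R : rat) ^+ n - q%:R ^+ i) / (q%:R ^+ s - q%:R ^+ i)).
Proof. by apply: eq_bigr => i _; rewrite !natrX. Qed.

Lemma fac_upper (a b c : rat) : 0 < a -> 1 < b -> 0 <= c ->
  (a * b * c - a) / (a * b - a) <= c * (b / (b - 1)).
Proof.
move=> a0 b1 c0.
have d0 : 0 < a * b - a by rewrite -[X in _ - X]mulr1 -mulrBr mulr_gt0 // subr_gt0.
rewrite ler_pdivrMr //.
have -> : c * (b / (b - 1)) * (a * b - a) = a * b * c.
  by field; rewrite subr_eq0 gt_eqF.
by rewrite lerBlDr lerDl ltW.
Qed.

Lemma Gstep (x y : rat) : 2 <= x -> 1 <= y ->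
  (x * y) / (x * y - 1) * (4 * (y - 1) / y) <= 4 * (x * y - 1) / (x * y).
Proof.
move=> x2 y1.
have xy1 : 1 < x * y by nra.
have h1 : 0 < x * y - 1 by lra.
have h2 : 0 < y by lra.
have -> : (x * y) / (x * y - 1) * (4 * (y - 1) / y) = 4 * x * (y - 1) / (x * y - 1).
  by field; rewrite ?gt_eqF.
rewrite ler_pdivrMr //.
have -> : 4 * (x * y - 1) / (x * y) * (x * y - 1) = 4 * (x * y - 1) ^+ 2 / (x * y).
  by field; rewrite gt_eqF //; lra.
rewrite ler_pdivlMr; last by lra.
have : 0 <= (x - 2) * (x * y) by apply: mulr_ge0; lra.
nra.
Qed.

Definition Gf (x : rat) j := x ^+ j / (x ^+ j - 1).

Lemma Gf_ge0 x j : 2 <= x -> (0 < j)%N -> 0 <= Gf x j.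
Proof.
move=> x2 j0; have : 1 < x ^+ j by rewrite exprn_egt1 ?lt0n_neq0 //; lra.
by move=> h; rewrite /Gf divr_ge0 //; lra.
Qed.

Lemma Qbound x s : 2 <= x -> (0 < s)%N ->
  \prod_(i < s) Gf x (s - i) <= 4 * (x ^+ s - 1) / x ^+ s.
Proof.
move=> x2; elim: s => // s IH _.
rewrite big_ord_recl subn0.
rewrite (eq_bigr (fun i : 'I_s => Gf x (s - i))); last by move=> i _; rewrite lift0 subSS.
case: s IH => [_|s IH].
  rewrite big_ord0 mulr1 /Gf expr1.
  rewrite ler_pdivrMr; last by lra.
  rewrite mulrAC ler_pdivlMr; last by lra.
  have : 0 <= (x - 2) * x by apply: mulr_ge0; lra.
  nra.
apply: le_trans (ler_wpM2l (@Gf_ge0 x s.+2 x2 isT) (IH isT)) _.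
have y1 : 1 <= x ^+ s.+1 by apply: exprn_ege1; lra.
by rewrite /Gf exprS Gstep.
Qed.

Lemma gb_upper q n s : (1 < q)%N -> (s <= n)%N ->
  gauss_binom q n s <= 4 * (q%:R : rat) ^+ (s * (n - s)).
Proof.
move=> q1 sn; set x : rat := q%:R.
have x2 : 2 <= x by rewrite /x (ler_nat _ 2).
case: s sn => [|s] sn.
  by rewrite /gauss_binom big_ord0 mul0n expr0 mulr1; lra.
rewrite gbE -/x.
apply: (@le_trans _ _ (\prod_(i < s.+1) (x ^+ (n - s.+1) * Gf x (s.+1 - i)))).
  apply: ler_prod => i _; have lis := ltn_ord i.
  have e1 : x ^+ s.+1 = x ^+ i * x ^+ (s.+1 - i) by rewrite -exprD subnKC // ltnW.
  have e2 : x ^+ n = x ^+ i * x ^+ (s.+1 - i) * x ^+ (n - s.+1).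
    by rewrite -!exprD subnKC ?subnKC // ltnW.
  have a0 : 0 < x ^+ i by rewrite exprn_gt0 //; lra.
  have b1 : 1 < x ^+ (s.+1 - i) by rewrite exprn_egt1 ?subn_eq0 -?ltnNge //; lra.
  have c0 : 0 <= x ^+ (n - s.+1) by rewrite exprn_ge0 //; lra.
  rewrite e1 e2 fac_upper // andbT.
  rewrite divr_ge0 //.
    rewrite subr_ge0 -[X in X <= _]mulr1 -mulrA ler_wpM2l ?ltW //.
    have c1 : 1 <= x ^+ (n - s.+1) by apply: exprn_ege1; lra.
    nra.
  by rewrite subr_ge0 -[X in X <= _]mulr1 ler_wpM2l ?ltW.
rewrite big_split /= prodr_const card_ord -exprM mulnC.
rewrite mulrC; apply: ler_wpM2r; first by apply: exprn_ge0; lra.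
apply: le_trans (@Qbound x s.+1 x2 isT) _.
have y1 : 1 <= x ^+ s.+1 by apply: exprn_ege1; lra.
rewrite ler_pdivrMr; last by lra.
lra.
Qed.

Lemma gb_lower q t s : (1 < q)%N -> (s <= t)%N ->
  (q%:R : rat) ^+ (s * (t - s)) <= gauss_binom q t s.
Proof.
move=> q1 st; set x : rat := q%:R.
have x2 : 2 <= x by rewrite /x (ler_nat _ 2).
rewrite gbE -/x mulnC exprM -[in X in _ ^+ X](card_ord s) -prodr_const.
apply: ler_prod => i _; have lis := ltn_ord i.
rewrite exprn_ge0 /=; last by lra.
have d0 : 0 < x ^+ s - x ^+ i by rewrite subr_gt0 ltr_eXn2l //; lra.
rewrite ler_pdivlMr // mulrBr -exprD subnK // lerB //.
by rewrite ler_peMl ?exprn_ge0 ?exprn_ege1 //; lra.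
Qed.

Lemma gb_pos q t s : (1 < q)%N -> (s <= t)%N -> 0 < gauss_binom q t s.
Proof.
move=> q1 st; apply: lt_le_trans (gb_lower q1 st).
by rewrite exprn_gt0 // ltr0n; apply: ltnW.
Qed.

Lemma ratio_bound q n t s : (1 < q)%N -> (s <= t)%N -> (t <= n)%N ->
  gauss_binom q n s / gauss_binom q t s <= 4 * (q%:R : rat) ^+ (s * (n - t)).
Proof.
move=> q1 st tn; set x : rat := q%:R.
have x2 : 2 <= x by rewrite /x (ler_nat _ 2).
rewrite ler_pdivrMr ?gb_pos //.
apply: le_trans (gb_upper q1 (leq_trans st tn)) _.
have -> : (s * (n - s) = s * (n - t) + s * (t - s))%N by rewrite -mulnDr; congr (_ * _)%N; lia.
rewrite exprD mulrA ler_wpM2l ?gb_lower //.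
by rewrite mulr_ge0 ?exprn_ge0 //; lra.
Qed.

Lemma gb_ratio_nat q n t s : (1 < q)%N -> (s <= t)%N -> (t <= n)%N ->
  gauss_binom q n s / gauss_binom q t s =
  (\prod_(i < s) (q ^ n - q ^ i))%N%:R / (\prod_(i < s) (q ^ t - q ^ i))%N%:R.
Proof.
move=> q1 st tn.
have q0 : (0 < q)%N by apply: ltnW.
have fac m i : (s <= m)%N -> (i < s)%N -> (q ^ m - q ^ i)%N%:R = (q%:R : rat) ^+ m - q%:R ^+ i.
  by move=> sm ii; rewrite natrB ?leq_pexp2l // ?natrX //; apply: ltnW; apply: leq_trans sm.
rewrite !natr_prod.
rewrite (eq_bigr (fun i : 'I_s => (q%:R : rat) ^+ n - q%:R ^+ i)); last first.
  by move=> i _; rewrite fac // (leq_trans st tn).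
rewrite [X in _ / X](eq_bigr (fun i : 'I_s => (q%:R : rat) ^+ t - q%:R ^+ i)); last first.
  by move=> i _; rewrite fac.
rewrite !gbE !prodf_div.
have nz m : (s <= m)%N -> \prod_(i < s) ((q%:R : rat) ^+ m - q%:R ^+ i) != 0.
  move=> sm; rewrite prodf_seq_neq0; apply/allP => i _ /=.
  rewrite subr_eq0 gt_eqF // ltr_eXn2l //; first by apply: leq_trans sm.
  by rewrite ltr1n.
by field; rewrite !nz.
Qed.

Lemma third_ineq q n d tau e : (1 < q)%N ->
  4 * \sum_(e.+1 <= t < tau.+1) (q%:R : rat) ^+ ((2 * t + 1 - d) * (n - t))
  <= 4 * (tau - e)%N%:R * (q%:R : rat) ^+ ((2 * tau + 1 - d) * (n - e - 1)).
Proof.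
move=> q1; set x : rat := q%:R.
have x1 : 1 < x by rewrite /x ltr1n.
rewrite -mulrA ler_wpM2l //.
apply: (@le_trans _ _ (\sum_(e.+1 <= t < tau.+1) x ^+ ((2 * tau + 1 - d) * (n - e - 1)))).
  rewrite big_nat [X in _ <= X]big_nat; apply: ler_sum => t /andP [et tt].
  rewrite ler_eXn2l //.
  by apply: leq_mul; lia.
by rewrite sumr_const_nat subSS mulr_natl.
Qed.

Lemma disj_bigcup (T : eqType) (A : finType) (l : seq T) (X : T -> {set A})
   (U : {set A}) :
  (forall c, c \in l -> [disjoint U & X c]) -> [disjoint U & \bigcup_(c <- l) X c].
Proof.
elim: l => [|c l IH] H; first by rewrite big_nil -setI_eq0 setI0.
rewrite big_cons -setI_eq0 setIUr setU_eq0 !setI_eq0 H ?mem_head //=.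
by apply: IH => y yl; apply: H; rewrite in_cons yl orbT.
Qed.

Lemma disjoint_count (T : eqType) (A : finType) (l : seq T) (X : T -> {set A})
    (Y : {set A}) N :
  uniq l -> (forall c, c \in l -> #|X c| = N /\ X c \subset Y) ->
  (forall c c', c \in l -> c' \in l -> c != c' -> [disjoint X c & X c']) ->
  (size l * N <= #|Y|)%N.
Proof.
move=> ul HX Hd.
suff [E S] : #|\bigcup_(c <- l) X c| = (size l * N)%N /\ \bigcup_(c <- l) X c \subset Y.
  by rewrite -E subset_leq_card.
elim: l ul HX Hd => [|c l IH] /=.
  by move=> _ _ _; rewrite big_nil cards0 sub0set.
case/andP => cl ul HX Hd.
have sub : {subset l <= c :: l} by move=> y yl; rewrite in_cons yl orbT.
have [E S] := IH ul (fun c' h => HX c' (sub c' h))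
  (fun a b ha hb => Hd a b (sub a ha) (sub b hb)).
have [Xc XcY] := HX c (mem_head _ _).
rewrite big_cons; split; last by rewrite subUset XcY.
rewrite cardsU E Xc.
suff -> : X c :&: \bigcup_(c' <- l) X c' = set0 by rewrite cards0 subn0 mulSn.
apply/eqP; rewrite setI_eq0; apply: disj_bigcup => c' c'l.
apply: Hd; rewrite ?mem_head ?in_cons ?c'l ?orbT //.
by apply: contraNneq cl => ->.
Qed.

Lemma size_partition (T : eqType) (l : seq T) (g : T -> nat) lo hi :
  (forall c, c \in l -> lo <= g c < hi)%N ->
  size l = (\sum_(lo <= t < hi) count (fun c => g c == t) l)%N.
Proof.
elim: l => [|c l IH] H /=; first by rewrite big1.
rewrite big_split /= -IH; last by move=> y yl; apply: H; rewrite in_cons yl orbT.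
suff -> : (\sum_(lo <= t < hi) (g c == t))%N = 1%N by rewrite add1n.
rewrite -big_mkcond /= sum1_count.
rewrite (eq_count (a2 := pred1 (g c))); last by move=> t; rewrite /= eq_sym.
rewrite count_uniq_mem ?iota_uniq // mem_index_iota.
by rewrite H // mem_head.
Qed.

Unset Implicit Arguments.

Theorem theorem2 (K : finFieldType) (L : fieldExtType K) (q n k tau : nat)
  (alpha : 'I_n -> L) :
  #|K| = q ->
  (n <= \dim {:L})%N ->
  free [seq alpha i | i <- enum 'I_n] ->
  (k <= n)%N ->
  let d := (n - k + 1)%N in
  let e := (d.-1./2)%N in
  (tau < d)%N ->
  (e < tau)%N ->
  forall (r : 'rV[L]_n) (s : seq 'rV[L]_n),
    uniq s ->
    (forall c, c \in s ->
       gabidulin_codeword q k alpha c /\ (rank_q (c - r) <= tau)%N) ->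
    let S1 : rat := \sum_(e.+1 <= t < tau.+1)
        gauss_binom q n (2 * t + 1 - d) / gauss_binom q t (2 * t + 1 - d) in
    let S2 : rat := \sum_(e.+1 <= t < tau.+1)
        (q%:R) ^+ ((2 * t + 1 - d) * (n - t)) in
    [/\ (size s)%:R <= S1,
        S1 <= 4 * S2
      & 4 * S2 <= 4 * (tau - e)%N%:R
                    * (q%:R) ^+ ((2 * tau + 1 - d) * (n - e - 1))].
Proof.
move=> qK mL fr kn d e taud etau r s us Hs S1 S2.
have q1 : (1 < q)%N by rewrite -qK; apply: card_finNzRing_gt1.
have taun : (tau <= n)%N by rewrite /d in taud; lia.
have e2 : (d <= 2 * e.+1)%N by rewrite /e; move: (d) => x; clear; lia.
split.
- subst q.
  pose Rc (c : 'rV[L]_n) := Mq (c - r).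
  pose g (c : 'rV[L]_n) := maxn (\rank (Rc c)) e.+1.
  pose U (c : 'rV[L]_n) := odflt 0 [pick V : 'M[K]_n | (Rc c <= V)%MS && (\rank V == g c)].
  have hg c : c \in s -> (e.+1 <= g c <= tau)%N.
    move=> cs; have [_ rc] := Hs c cs; rewrite /g leq_maxr /= geq_max rc.
    exact: etau.
  have hU c : c \in s -> (Rc c <= U c)%MS /\ \rank (U c) = g c.
    move=> cs; rewrite /U; case: pickP => [V /andP [h1 /eqP h2] //| H0].
    have /andP [_ gt] := hg c cs.
    have [V HV] : exists V : 'M[K]_n, (Rc c <= V)%MS && (\rank V == g c).
      apply: extend_space; rewrite leq_maxl /=; exact: leq_trans gt taun.
    by have := H0 V; rewrite HV.
  have dist c c' : c \in s -> c' \in s -> c != c' -> (d <= \rank (Mq (c - c')))%N.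
    move=> cs c's ne; have [h1 _] := Hs c cs; have [h2 _] := Hs c' c's.
    exact: (codeword_dist fr kn h1 h2 ne).
  have per t : (e.+1 <= t <= tau)%N ->
      (count (fun c => g c == t) s)%:R <=
      gauss_binom #|K| n (2 * t + 1 - d) / gauss_binom #|K| t (2 * t + 1 - d).
    move=> /andP [et tt].
    set st := (2 * t + 1 - d)%N.
    have stt : (st <= t)%N by rewrite /st; lia.
    have tn : (t <= n)%N by lia.
    rewrite gb_ratio_nat //.
    have Nt0 : (0 < \prod_(i < st) (#|K| ^ t - #|K| ^ i))%N.
      apply: prodn_gt0 => i; rewrite subn_gt0 ltn_exp2l //.
      exact: leq_trans (ltn_ord i) stt.
    rewrite ler_pdivlMr ?ltr0n // -natrM ler_nat -size_filter.
    rewrite -(card_rowfree K (leq_trans stt tn)).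
    apply: (disjoint_count (X := fun c => [set A : 'M[K]_(st, n) | row_free A && (A <= U c)%MS])).
    + exact: filter_uniq.
    + move=> c; rewrite mem_filter => /andP [/eqP gc cs]; have [_ rU] := hU c cs.
      split.
        rewrite card_rowfree_sub card_rowfree rU ?gc //.
      by apply/subsetP => A; rewrite !inE => /andP [].
    + move=> c c'; rewrite !mem_filter => /andP [/eqP gc cs] /andP [/eqP gc' c's] ne.
      rewrite -setI_eq0; apply/eqP/setP => A; rewrite !inE.
      apply/negP => /andP [/andP [fA AU] /andP [_ AU']].
      have [RU rU] := hU c cs; have [RU' rU'] := hU c' c's.
      have h1 : (st <= \rank (U c :&: U c'))%N.
        by rewrite -(eqP fA); apply: mxrankS; rewrite sub_capmx AU AU'.
      have h2 := mxrank_sum_cap (U c) (U c').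
      have h3 : (Mq (c - c') <= U c + U c')%MS.
        have -> : c - c' = (c - r) - (c' - r) by rewrite opprB addrA subrK.
        rewrite MqB; apply: addmx_sub_adds => //.
        by rewrite eqmx_opp.
      have h4 := mxrankS h3.
      have := dist c c' cs c's ne.
      rewrite rU rU' gc gc' in h2.
      rewrite /st in h1; lia.
  rewrite (size_partition (g := g) (lo := e.+1) (hi := tau.+1)); last first.
    by move=> c cs; have := hg c cs; rewrite ltnS.
  rewrite natr_sum /S1 !big_nat; apply: ler_sum => t /andP [et tt].
  by apply: per; rewrite et -ltnS tt.
- rewrite /S1 /S2 mulr_sumr big_nat [X in _ <= X]big_nat; apply: ler_sum => t /andP [et tt].
  apply: ratio_bound => //; lia.
- exact: third_ineq.
Qed.
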